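(* Let $n\ge3$. Suppose that for every set $W\subseteq V$ with $|W|=n$ that can be generated from some connected pair, there exist $X\supseteq W$ with $D[X]$ a directed sub-block and a node $i\in W$ reachable from all other nodes in both $D[W]$ and $D[X]$. Then the same conclusion holds for every set $W\subseteq V$ with $|W|=n+1$ that can be generated from some connected pair.
   Context: $D=(V,A)$ is a directed graph. $\mathrm{IN}(X)$ is the set of nodes from which some member of $X$ is reachable by a directed path. For disjoint nonempty $X,Y,Z$, $f_E(X,Y,Z)=1$ iff $\mathrm{IN}(X)\cap\mathrm{IN}(Y)=\emptyset$ computed in $D-Z$; node $j$ is dynamically partitioning relative to $k$ and $Y$ iff $f_E(\{k\},Y,\{j\})=1$. A connected pair is a set $\{i,j\}$ joined by an arc in some direction. A set $W_n$ of size $n$ can be generated from $W_m$ of size $m$, $2\le m<n$, iff there are sets $W_m\subset\dots\subset W_n$ with $W_{l+1}=W_l\cup\{k\}$, $k\in V\setminus W_l$, such that there is an arc from $k$ to some $j\in W_l$ that is not dynamically partitioning relative to $k$ and $W_l\setminus\{j\}$. $D[W]$ is the subgraph induced on $W$; reachability in $D[W]$ is via directed paths inside $D[W]$. A graph is biconnected if it has at least three vertices, is connected and remains connected after deleting any one vertex. $D[X]$ is a directed sub-block if some node of $X$ is reachable within $D[X]$ from all other nodes and the underlying undirected graph of $D[X]$ is biconnected. *)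

(* Defs.v *)
(* Finite digraph D = (V, A): V = T : finType, A given by a : rel T. *)
From mathcomp Require Import all_boot.
Set Implicit Arguments. Unset Strict Implicit. Unset Printing Implicit Defensive.

Section Defs.
Variable T : finType.
Variable a : rel T.

(* the relation a restricted to the node set S (induced subgraph D[S]) *)
Definition restr (r : rel T) (S : {set T}) : rel T :=
  [rel x y | [&& x \in S, y \in S & r x y]].

(* IN(X) computed in the subgraph induced on S: nodes of S from which some
   member of X is reachable by a directed path (possibly trivial) inside S *)
Definition IN_in (S X : {set T}) : {set T} :=
  [set x in S | [exists y in X, connect (restr a S) x y]].

(* f_E(X,Y,Z) = 1 iff IN(X) and IN(Y) are disjoint, computed in D - Z *)
Definition fE (X Y Z : {set T}) : bool :=
  [disjoint IN_in (~: Z) X & IN_in (~: Z) Y].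

Definition dyn_part (j k : T) (Y : {set T}) : bool := fE [set k] Y [set j].

Definition gen_step (W W' : {set T}) : Prop :=
  exists k, k \notin W /\ W' = k |: W /\
    exists j, j \in W /\ a k j /\ ~~ dyn_part j k (W :\ j).

Inductive gen_chain (W0 : {set T}) : {set T} -> Prop :=
| gen_chain_refl : gen_chain W0 W0
| gen_chain_step W1 W2 : gen_chain W0 W1 -> gen_step W1 W2 -> gen_chain W0 W2.

Definition generated_from (Wm Wn : {set T}) : Prop :=
  2 <= #|Wm| < #|Wn| /\ gen_chain Wm Wn.

Definition connected_pair (P : {set T}) : Prop :=
  exists i j, i != j /\ (a i j || a j i) /\ P = [set i; j].

Definition gen_from_pair (W : {set T}) : Prop :=
  exists P, connected_pair P /\ generated_from P W.

Definition sink_in (X : {set T}) (i : T) : Prop :=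
  i \in X /\ forall x, x \in X -> connect (restr a X) x i.

Definition uadj : rel T := [rel x y | (x != y) && (a x y || a y x)].

Definition uconnected (S : {set T}) : Prop :=
  forall x y, x \in S -> y \in S -> connect (restr uadj S) x y.

Definition biconnected (X : {set T}) : Prop :=
  3 <= #|X| /\ uconnected X /\ forall v, v \in X -> uconnected (X :\ v).

Definition directed_subblock (X : {set T}) : Prop :=
  (exists i, sink_in X i) /\ biconnected X.

Definition has_block (W : {set T}) : Prop :=
  exists X : {set T}, W \subset X /\ directed_subblock X /\
    exists i, i \in W /\ sink_in W i /\ sink_in X i.

End Defs.

(* Main.v *)
Require Import Defs.
From mathcomp Require Import all_boot.
Set Implicit Arguments. Unset Strict Implicit. Unset Printing Implicit Defensive.

Section Gen.
Variable T : finType.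
Implicit Types (r : rel T) (S A B : {set T}).

Lemma restrE r S x y : restr r S x y = [&& x \in S, y \in S & r x y].
Proof. by []. Qed.

Lemma restr_mono r A B x y : A \subset B -> restr r A x y -> restr r B x y.
Proof. rewrite /restr /= => /subsetP sAB /and3P[xA yA rxy]; by rewrite !sAB. Qed.

Lemma connect_mono r A B x y : A \subset B ->
  connect (restr r A) x y -> connect (restr r B) x y.
Proof.
move=> sAB; apply: connect_sub => u v h; apply: connect1; exact: restr_mono h.
Qed.

Lemma path_restr r S x p : all (mem S) (x :: p) -> path r x p -> path (restr r S) x p.
Proof.
elim: p x => //= y p IH x /and3P[xS yS allp] /andP[rxy pp].
by rewrite /= restrE xS yS rxy /= IH //= yS.
Qed.

Lemma path_restr_mem r S x p : path (restr r S) x p -> {subset p <= S}.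
Proof.
elim: p x => //= y p IH x /andP[]; rewrite restrE => /and3P[_ yS _] pp u.
by rewrite inE => /predU1P[->//|]; apply: IH pp u.
Qed.

Lemma connect_restr_end r S u t : connect (restr r S) u t -> u = t \/ t \in S.
Proof.
case/connectP=> p pp ->; case: p pp => [|y p] pp; first by left.
right; apply: (path_restr_mem pp) => /=; exact: mem_last.
Qed.

Lemma conn_path r S x p : path r x p -> all (mem S) (x :: p) ->
  connect (restr r S) x (last x p).
Proof. by move=> pp al; apply/connectP; exists p => //; apply: path_restr. Qed.

Lemma restr_sym r S : symmetric r -> symmetric (restr r S).
Proof. by move=> sr x y; rewrite !restrE sr andbCA. Qed.

Lemma suffix_gen r z p u : u \in z :: p -> exists q,
  [/\ path r z p -> path r u q, last u q = last z p, size q <= size p,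
      uniq (z :: p) -> uniq (u :: q) & {subset u :: q <= z :: p}].
Proof.
rewrite inE => /predU1P[->|].
  by exists p; split.
case/splitPr=> l q; exists q; split.
- by rewrite /= cat_path => /andP[_ /= /andP[]].
- by rewrite /= last_cat.
- by rewrite size_cat /= addnS ltnW // ltnS leq_addl.
- by rewrite /= cat_uniq => /andP[_ /and3P[_ _]].
- by move=> v vq; rewrite inE mem_cat vq !orbT.
Qed.

Lemma suffix_tail r z p u : u \in p -> exists q,
  [/\ path r z p -> path r u q, last u q = last z p, size q < size p,
      uniq (z :: p) -> uniq (u :: q) & {subset u :: q <= z :: p}].
Proof.
case/splitPr=> l q; exists q; split.
- by rewrite cat_path => /andP[_ /= /andP[]].
- by rewrite last_cat.
- by rewrite size_cat /= ltn_addl.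
- by rewrite /= cat_uniq => /andP[_ /and3P[_ _]].
- by move=> v vq; rewrite inE mem_cat vq !orbT.
Qed.

Lemma seg r x p u v : symmetric r -> path r x p -> uniq (x :: p) ->
  u \in x :: p -> u != v ->
  let S := [set z | (z \in x :: p) && (z != v)] in
  connect (restr r S) u x \/ connect (restr r S) u (last x p).
Proof.
move=> sr pp up; rewrite inE => /predU1P[->|]; first by left.
move=> {}up0 uv /=; move: up0 pp up; case/splitPr=> l q pp up.
have Hs : connect_sym (restr r [set z | (z \in x :: l ++ u :: q) && (z != v)]).
  by apply: sym_connect_sym; apply: restr_sym.
case vq: (v \in q).
- left; rewrite Hs.
  have := @conn_path r [set z | (z \in x :: l ++ u :: q) && (z != v)] x (rcons l u).
  rewrite last_rcons; apply.
    by rewrite -cats1 cat_path /=; move: pp; rewrite cat_path /= => /and3P[-> ->].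
  apply/allP=> w; rewrite inE mem_rcons !inE => /orP[/eqP->|/orP[/eqP->|wl]].
  + rewrite eqxx /=; apply/eqP=> xv; move: up; by rewrite xv /= mem_cat inE vq !orbT.
  + by rewrite mem_cat inE eqxx !orbT /=.
  + rewrite mem_cat wl orbT /=; apply/eqP=> wv.
    move: up; rewrite /= cat_uniq => /andP[_ /and3P[_ /hasPn H _]].
    by move: (H v); rewrite inE vq orbT => /(_ isT); rewrite -wv wl.
- right; rewrite last_cat /=.
  apply: conn_path.
    by move: pp; rewrite cat_path /= => /and3P[_ _ ->].
  apply/allP=> w; rewrite inE => /predU1P[->|wq].
    by rewrite !inE mem_cat inE eqxx !orbT.
  rewrite !inE mem_cat inE wq !orbT /=; apply/eqP=> wv; by rewrite -wv wq in vq.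
Qed.


End Gen.

Section Ear.
Variable T : finType.
Variable a : rel T.
Implicit Types (S A B X Y : {set T}).

Lemma uadj_sym : symmetric (uadj a).
Proof. by move=> x y; rewrite /uadj /= eq_sym orbC. Qed.

Lemma hub Y B :
  (forall b1 b2, b1 \in B -> b2 \in B -> connect (restr (uadj a) Y) b1 b2) ->
  (forall u, u \in Y -> exists2 b, b \in B & connect (restr (uadj a) Y) u b) ->
  uconnected a Y.
Proof.
move=> hB hY x y xY yY.
have [bx bxB cx] := hY x xY; have [by' byB cy] := hY y yY.
have Hs : connect_sym (restr (uadj a) Y) by apply/sym_connect_sym/restr_sym/uadj_sym.
apply: connect_trans cx _; apply: connect_trans (hB _ _ bxB byB) _.
by rewrite Hs.
Qed.

Lemma uconn_lift A B : A \subset B -> uconnected a A ->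
  forall x y, x \in A -> y \in A -> connect (restr (uadj a) B) x y.
Proof. by move=> sAB hA x y xA yA; apply: connect_mono sAB (hA x y xA yA). Qed.

Lemma ear_bicon Xp j s : biconnected a Xp -> j \in Xp -> path (uadj a) j s ->
  uniq (j :: s) -> last j s \in Xp ->
  (forall x, x \in s -> x \in Xp -> x = last j s) ->
  biconnected a (Xp :|: [set x in s]).
Proof.
move=> [c3 [cX cXv]] jX ps us lX interior.
set X := Xp :|: [set x in s].
have sXpX : Xp \subset X by apply: subsetUl.
have claim : forall v u, u \in s -> u != v ->
    exists2 t, t \in Xp :\ v & connect (restr (uadj a) (X :\ v)) u t.
  move=> v u us' uv.
  have uin : u \in j :: s by rewrite inE us' orbT.
  have subS : [set z | (z \in j :: s) && (z != v)] \subset X :\ v.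
    apply/subsetP=> z; rewrite !inE => /andP[/predU1P[->|zs] zv]; rewrite zv /=.
      by rewrite jX.
    by rewrite zs orbT.
  have fin : forall t, t \in Xp ->
      connect (restr (uadj a) [set z | (z \in j :: s) && (z != v)]) u t ->
      exists2 t, t \in Xp :\ v & connect (restr (uadj a) (X :\ v)) u t.
    move=> t tX ct; exists t; last exact: connect_mono subS ct.
    rewrite !inE tX andbT.
    case: (connect_restr_end ct) => [<- //|]; by rewrite !inE => /andP[_ ->].
  case: (seg uadj_sym ps us uin uv) => /= ct; first exact: fin jX ct.
  exact: fin lX ct.
have hXpv : forall v, uconnected a (Xp :\ v).
  move=> v; case vX: (v \in Xp); first exact: cXv.
  have -> : Xp :\ v = Xp.
    by apply/setP=> x; rewrite !inE; case: eqP => // ->; rewrite vX.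
  exact: cX.
split; last split.
- by rewrite (leq_trans c3) // subset_leq_card.
- apply: (hub (B := Xp)).
    by move=> b1 b2 b1X b2X; apply: connect_mono sXpX (cX _ _ b1X b2X).
  move=> u; rewrite /X in_setU inE => /orP[uX|us'].
    by exists u => //; apply: connect0.
  have uj : u != j by apply/eqP=> uj; move: us; rewrite /= -uj us'.
  have [t] := claim j u us' uj; rewrite in_setD1 => /andP[_ tX] ct.
  by exists t => //; apply: connect_mono ct; apply: subD1set.
- move=> v vX; apply: (hub (B := Xp :\ v)).
    move=> b1 b2 b1X b2X; apply: (uconn_lift _ (hXpv v)) => //.
    by apply: setSD.
  move=> u; rewrite in_setD1 => /andP[uv]; rewrite /X in_setU inE => /orP[uX|us'].
    by exists u; [rewrite in_setD1 uv | apply: connect0].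
  exact: claim.
Qed.

End Ear.

From mathcomp Require Import zify.

Section Cfg.
Variable T : finType.
Variable a : rel T.
Variables (Xp : {set T}) (j k : T).
Let R := restr a (~: [set j]).

Definition nice z p1 p2 := [/\ path R z p1, last z p1 = k, path R z p2,
  last z p2 \in Xp & [/\ uniq (z :: p1), uniq (z :: p2),
  uniq (z :: p1 ++ p2) &
    (forall x, x \in z :: p1 ++ p2 -> x \in Xp -> x = last z p2)]].

Lemma nice_exists N : forall z p1 p2, size p1 + size p2 < N ->
  path R z p1 -> last z p1 = k -> path R z p2 -> last z p2 \in Xp ->
  uniq (z :: p1) -> uniq (z :: p2) -> exists z' p1' p2', nice z' p1' p2'.
Proof.
elim: N => // N IH z p1 p2 hs pp1 l1 pp2 l2 u1 u2.
have [/hasP[x xp1 xz2]|nA] := boolP (has (fun x => x \in z :: p2) p1).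
  have [q1 [hq1 lq1 sq1 uq1 _]] := suffix_tail R z xp1.
  have [q2 [hq2 lq2 sq2 uq2 _]] := suffix_gen R xz2.
  apply: (IH x q1 q2 _ (hq1 pp1) _ (hq2 pp2) _ (uq1 u1) (uq2 u2));
    [ | by rewrite lq1 | by rewrite lq2].
  have h1 : size q1 < size p1 by exact: sq1.
  have h2 : size q2 <= size p2 by exact: sq2.
  clear sq1 sq2; lia.
have [/hasP[x xp1 xX]|nB] := boolP (has (mem Xp) p1).
  have [q1 [hq1 lq1 sq1 uq1 _]] := suffix_tail R z xp1.
  apply: (IH x q1 [::] _ (hq1 pp1) _ _ _ (uq1 u1)) => //=;
    [ | by rewrite lq1].
  have h1 : size q1 < size p1 by exact: sq1.
  clear sq1; lia.
have [/andP[zX p2n]|nC] := boolP ((z \in Xp) && (p2 != [::])).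
  apply: (IH z p1 [::]) => //=; case: p2 p2n hs {pp2 l2 u2 nA} => //= ? ? _; lia.
have [/hasP[x xp2 /andP[xX xl]]|nD] :=
  boolP (has (fun x => (x \in Xp) && (x != last z p2)) p2).
  have [l [r E]] : exists l r, p2 = l ++ x :: r.
    by case/splitPr: xp2 => l r; exists l, r.
  rewrite E in hs pp2 l2 u2 xl.
  case: r E hs pp2 l2 u2 xl => [|y r] E hs pp2 l2 u2 xl.
    by rewrite last_cat /= eqxx in xl.
  apply: (IH z p1 (rcons l x)) => //.
  - rewrite size_rcons; move: hs; rewrite size_cat /=; lia.
  - move: pp2; rewrite -cats1 !cat_path => /andP[-> /andP[hx _]]; by rewrite /= hx.
  - by rewrite last_rcons.
  - by move: u2; rewrite -cat_rcons -cat_cons cat_uniq => /andP[-> _].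
exists z, p1, p2; split => //; split => //.
  rewrite -cat_cons cat_uniq u1 /= andbC; move: u2 => /= /andP[zp2 ->] /=.
  apply/hasPn=> x xp2; rewrite inE negb_or; apply/andP; split.
    by apply: contra zp2 => /eqP <-.
  by apply: contra nA => xp1; apply/hasP; exists x => //; rewrite inE xp2 orbT.
move=> x; rewrite inE mem_cat => /orP[/eqP->|/orP[xp1|xp2]] xX.
- move: nC; rewrite xX /=; by case: (p2) => //= /negbNE.
- by move: nB => /hasPn /(_ x xp1); rewrite /= xX.
- by move: nD => /hasPn /(_ x xp2); rewrite xX /= negbK => /eqP.
Qed.

End Cfg.

Section Main.
Variable T : finType.
Variable a : rel T.

Lemma path_uadj S z p : path (restr a S) z p -> uniq (z :: p) -> path (uadj a) z p.
Proof.
elim: p z => //= y p IH z /andP[hzy pp] /andP[zn up].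
rewrite IH // andbT /uadj /=; move: hzy; rewrite restrE => /and3P[_ _ ->].
by rewrite orTb andbT; apply: contra zn => /eqP->; rewrite inE eqxx.
Qed.

Lemma path_a S z p : path (restr a S) z p -> path a z p.
Proof. by apply: sub_path => x y; rewrite restrE => /and3P[]. Qed.

Lemma path_all S z p : path (restr a S) z p -> last z p \in S -> all (mem S) (z :: p).
Proof.
case: p => [|y p] /=; first by move=> _ ->.
move=> /andP[hzy pp] _; move: (hzy); rewrite restrE => /and3P[-> yS _] /=.
rewrite yS /=; apply/allP=> u up; exact: (path_restr_mem pp).
Qed.

End Main.

Theorem mainTheorem7 (T : finType) (a : rel T) (n : nat) :
  3 <= n ->
  (forall W : {set T}, #|W| = n -> gen_from_pair a W -> has_block a W) ->
  forall W : {set T}, #|W| = n.+1 -> gen_from_pair a W -> has_block a W.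
Proof.
move=> n3 IH W cW [P [[i0 [j0 [ij [aij EP]]]] [cPW Hc]]].
case: Hc cW cPW => [|W1 W2 Hc [k [kW1 [EW [j [jW1 [akj ndp]]]]]]] cW cPW.
  by rewrite ltnn andbF in cPW.
subst W2.
have cW1 : #|W1| = n by move: cW; rewrite cardsU1 kW1 => -[].
have gW1 : gen_from_pair a W1.
  exists P; split; first by exists i0, j0.
  split => //; rewrite EP cards2 ij cW1 /=; exact: n3.
have [Xp [sW1Xp [[_ bXp] [i [iW1 [sW1 sXp]]]]]] := IH W1 cW1 gW1.
have jX : j \in Xp by move/subsetP: sW1Xp; apply.
have kj : k != j by apply: contra kW1 => /eqP ->.
have jiX : connect (restr a Xp) j i by apply: sXp.2.
have sW : sink_in a (k |: W1) i.
  split; first by rewrite in_setU1 iW1 orbT.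
  move=> x; rewrite in_setU1 => /predU1P[->|xW1].
    apply: connect_trans (connect1 _) (connect_mono _ (sW1.2 j jW1)).
      by rewrite restrE akj in_setU1 eqxx in_setU1 jW1 orbT.
    by apply: subsetUr.
  by apply: connect_mono (sW1.2 x xW1); apply: subsetUr.
have iW : i \in k |: W1 by rewrite in_setU1 iW1 orbT.
case kX: (k \in Xp).
  exists Xp; split; first by rewrite subUset sub1set kX.
  by split; [split => //; exists i | exists i].
move: ndp; rewrite /dyn_part /fE -setI_eq0 => /set0Pn[x0].
rewrite !inE => /andP[/andP[_ /existsP[y /andP[yk cy]]] /andP[_ /existsP[w /andP[wW cw]]]].
move: yk; rewrite inE => /eqP Ey; subst y.
move: wW; rewrite !inE => /andP[wj wW1].
have wX : w \in Xp by move/subsetP: sW1Xp; apply.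
set R := restr a (~: [set j]) in cy cw.
case/connectP: cy => p pp Ep; case/shortenP: pp Ep => p1 pp1 up1 _ Ep.
case/connectP: cw => p' pp' Ep'; case/shortenP: pp' Ep' => p2 pp2 up2 _ Ep'.
have l2 : last x0 p2 \in Xp by rewrite -Ep'.
have [z [q1 [q2 [pq1 lq1 pq2 lq2 [uq1 uq2 uq interior]]]]] :=
  nice_exists (N := (size p1 + size p2).+1) (Xp := Xp) (k := k) (ltnSn _) pp1
    (esym Ep) pp2 l2 up1 up2.
have kS : last z q1 \in ~: [set j] by rewrite lq1 !inE.
have allq1 := path_all pq1 kS.
have zS : z \in ~: [set j] by move: allq1 => /andP[].
have allq2 : all (mem (~: [set j])) (z :: q2).
  by rewrite /= zS /=; apply/allP => u; apply: (path_restr_mem pq2).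
set s := rev (z :: q1) ++ q2.
have perm_s : perm_eq s (z :: q1 ++ q2).
  by rewrite /s -cat_cons perm_cat2r perm_rev.
have mem_s : forall x, (x \in s) = (x \in z :: q1 ++ q2) by apply: perm_mem.
have ls : last j s = last z q2 by rewrite /s last_cat rev_cons last_rcons.
have js : j \notin s.
  rewrite mem_s -cat_cons mem_cat negb_or; apply/andP; split.
    by apply/negP=> /(allP allq1); rewrite !inE eqxx.
  by apply/negP=> h; have := allP allq2 j; rewrite inE h orbT !inE eqxx => /(_ isT).
have us : uniq (j :: s) by rewrite /= js (perm_uniq perm_s).
have ps : path (uadj a) j s.
  rewrite /s cat_path rev_cons last_rcons -rev_cons.
  rewrite (path_uadj pq2 uq2) andbT (lastI z q1) rev_rcons /= rev_path.
  apply/andP; split.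
    by rewrite /uadj /= lq1 eq_sym kj akj orbT.
  apply: (sub_path _ (path_uadj pq1 uq1)) => x y; by rewrite uadj_sym.
set X := Xp :|: [set x in s].
have bX : biconnected a X.
  apply: (ear_bicon (j := j)) => //; first by rewrite ls.
  by move=> x xs xX; rewrite ls; apply: interior => //; rewrite -mem_s.
have inX : forall x, x \in z :: q1 ++ q2 -> x \in X.
  by move=> x xs; rewrite /X in_setU inE mem_s xs orbT.
have sXpX : Xp \subset X by apply: subsetUl.
have kX' : k \in X by apply: inX; rewrite -lq1 -cat_cons mem_cat mem_last.
have sX : sink_in a X i.
  split; first by move/subsetP: sXpX; apply; exact: sXp.1.
  move=> x; rewrite /X in_setU inE => /orP[xXp|].
    by apply: connect_mono sXpX (sXp.2 x xXp).
  rewrite mem_s -cat_cons mem_cat => /orP[xq1|xq2].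
    have [q [hq lq _ _ sq]] := suffix_gen R xq1.
    have cxk : connect (restr a X) x k.
      rewrite -lq1 -lq; apply: conn_path; first exact: path_a (hq pq1).
      by apply/allP=> u /sq uu; apply: inX; rewrite -cat_cons mem_cat uu.
    have ekj : restr a X k j by rewrite restrE kX' akj (subsetP sXpX j jX).
    exact: connect_trans cxk (connect_trans (connect1 ekj) (connect_mono sXpX jiX)).
  have xz2 : x \in z :: q2 by rewrite inE xq2 orbT.
  have [q [hq lq _ _ sq]] := suffix_gen R xz2.
  have cxl : connect (restr a X) x (last z q2).
    rewrite -lq; apply: conn_path; first exact: path_a (hq pq2).
    apply/allP=> u /sq; rewrite inE => /predU1P[->|uq0]; apply: inX.
      by rewrite inE eqxx.
    by rewrite in_cons mem_cat uq0 !orbT.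
  apply: connect_trans cxl _; exact: connect_mono sXpX (sXp.2 _ lq2).
exists X; split.
  rewrite subUset sub1set kX' /=; exact: subset_trans sW1Xp sXpX.
split; first by split => //; exists i.
by exists i.
Qed.
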